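(* Let $d\ge1$, $P\subseteq\mathbb R\times[d]$, $\alpha\in(0,1]$ and $\beta=1-(1-\alpha)^{1/(2d)}$. Let $\mathcal C_1,\dots,\mathcal C_{2d}$ be finite subfamilies of $\mathcal C_{\equiv}(P)$. If at least $\alpha|\mathcal C_1|\cdots|\mathcal C_{2d}|$ of the colorful $2d$-tuples $(C_1,\dots,C_{2d})\in\mathcal C_1\times\cdots\times\mathcal C_{2d}$ satisfy $C_1\cap\dots\cap C_{2d}\ne\emptyset$, then some $\mathcal C_i$ contains a subfamily of size $\beta|\mathcal C_i|$ whose members have a common point.
   Context: $[d]=\{1,\dots,d\}$. A (separated) $d$-interval is a set $I=\bigcup_{i\in[d]}\{(x,i): x\in I^{(i)}\}\subseteq\mathbb R\times[d]$ with each $I^{(i)}\subseteq\mathbb R$ convex (possibly empty). For $P\subseteq\mathbb R\times[d]$, $\mathcal C_{\equiv}(P)=\{I\cap P: I \text{ a } d\text{-interval}\}$. *)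

(* Defs.v *)
From Stdlib Require Import Reals Lra Lia List.
Import ListNotations.
Open Scope R_scope.

(* Points of R x [d]; the colour/index i is a nat, meaningful for 1 <= i <= d. *)
Definition point := (R * nat)%type.
Definition pset := point -> Prop.
Definition empty_pset : pset := fun _ => False.

Definition convexR (S : R -> Prop) : Prop :=
  forall x y z, S x -> S z -> x <= y <= z -> S y.

Definition d_interval (d : nat) (I : pset) : Prop :=
  (forall x i, I (x, i) -> (1 <= i <= d)%nat) /\
  (forall i, convexR (fun x => I (x, i))).

Definition in_Ceq (d : nat) (P : pset) (C : pset) : Prop :=
  exists I, d_interval d I /\ forall p, C p <-> (I p /\ P p).

(* a finite family of sets, listed without repetition (up to set equality) *)
Definition distinct_sets (l : list pset) : Prop :=
  forall i j, (i < length l)%nat -> (j < length l)%nat -> i <> j ->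
    ~ (forall p, nth i l empty_pset p <-> nth j l empty_pset p).

(* real n-th root of x >= 0 (with root 0 = 0) *)
Definition nroot (x : R) (n : nat) : R :=
  if Req_EM_T x 0 then 0 else Rpower x (/ INR n).

(* index tuple t = (t_0,...,t_{m-1}) selecting one member from each family Cs k *)
Definition valid_tuple (m : nat) (Cs : nat -> list pset) (t : list nat) : Prop :=
  length t = m /\ forall k, (k < m)%nat -> (nth k t 0 < length (Cs k))%nat.

Definition tuple_intersects (m : nat) (Cs : nat -> list pset) (t : list nat) : Prop :=
  exists p, forall k, (k < m)%nat -> nth (nth k t 0%nat) (Cs k) empty_pset p.

Definition prod_sizes (m : nat) (Cs : nat -> list pset) : R :=
  fold_right Rmult 1 (map (fun k => INR (length (Cs k))) (seq 0 m)).

(* Main.v *)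
Require Import Defs.
From Stdlib Require Import Reals Lra Lia List Classical ClassicalEpsilon.
Import ListNotations.
Open Scope R_scope.

Definition leS (X Y : R -> Prop) := forall x, X x -> exists y, Y y /\ x <= y.

Lemma leS_refl X : leS X X.
Proof. intros x Hx; exists x; split; auto; lra. Qed.

Lemma leS_trans X Y Z : leS X Y -> leS Y Z -> leS X Z.
Proof.
  intros H1 H2 x Hx. destruct (H1 x Hx) as [y [Hy Hxy]].
  destruct (H2 y Hy) as [z [Hz Hyz]]. exists z; split; auto; lra.
Qed.

Lemma leS_total X Y : ~ leS X Y -> leS Y X.
Proof.
  intros H y Yy.
  destruct (classic (exists x, X x /\ y <= x)) as [Hc|Hc]; auto.
  exfalso; apply H. intros x Xx. exists y. split; auto.
  destruct (Rle_dec y x) as [Hle|Hle]; [exfalso; eauto | lra].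
Qed.

Lemma min_exists {T} (F : T -> R -> Prop) : forall l, l <> [] ->
  exists t, In t l /\ forall t', In t' l -> leS (F t) (F t').
Proof.
  induction l as [|a l IH]; intros H; [contradiction|].
  destruct l as [|b l'].
  - exists a. split; [left; auto|]. intros t' [<-|[]]. apply leS_refl.
  - destruct (IH ltac:(discriminate)) as [t [Ht Hmin]].
    destruct (classic (leS (F a) (F t))) as [Hle|Hnle].
    + exists a. split; [left; auto|]. intros t' [<-|Ht'].
      * apply leS_refl.
      * eapply leS_trans; eauto.
    + exists t. split; [right; auto|]. intros t' [<-|Ht'].
      * apply leS_total; auto.
      * auto.
Qed.

Lemma geo (Pf X : R -> Prop) (Y : nat -> R -> Prop) :
  (forall x, X x -> Pf x) ->
  (forall j x y z, Y j x -> Y j z -> x <= y <= z -> Pf y -> Y j y) ->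
  forall l, (forall j, In j l -> leS X (Y j)) ->
  exists q, forall j, In j l -> (exists z, X z /\ Y j z) -> X q /\ Y j q.
Proof.
  intros HX HY. induction l as [|a l IH]; intros Hle.
  - exists 0. intros j [].
  - destruct IH as [q Hq]. { intros j Hj; apply Hle; right; auto. }
    destruct (classic (exists z, X z /\ Y a z)) as [[z [Xz Yz]] | Hno].
    + destruct (classic (exists j, In j l /\ exists z, X z /\ Y j z)) as [[j [Hj Hm]] | Hno'].
      * destruct (Hq j Hj Hm) as [Xq _].
        assert (Xq' : X (Rmax q z)).
        { unfold Rmax; destruct Rle_dec; auto. }
        exists (Rmax q z). intros j' [<-|Hj'] Hm'.
        -- split; auto. destruct (Hle a (or_introl eq_refl) _ Xq') as [w [Yw Hw]].
           apply (HY a z _ w); auto. split; [apply Rmax_r|]; auto.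
        -- destruct (Hq j' Hj' Hm') as [_ Yq]. split; auto.
           destruct (Hle j' (or_intror Hj') _ Xq') as [w [Yw Hw]].
           apply (HY j' q _ w); auto. split; [apply Rmax_l|]; auto.
      * exists z. intros j' [<-|Hj'] Hm'. { split; auto. }
        exfalso; apply Hno'; eauto.
    + exists q. intros j' [<-|Hj'] Hm'. { contradiction. } apply Hq; auto.
Qed.

Lemma partition (Pr : nat -> Prop) : forall l, NoDup l -> exists l1 l2,
  NoDup l1 /\ NoDup l2 /\ incl l1 l /\ incl l2 l /\ (forall x, In x l1 -> Pr x) /\
  (forall x, In x l2 -> ~ Pr x) /\ (length l1 + length l2 = length l)%nat.
Proof.
  induction l as [|a l IH]; intros ND.
  - exists [], []. repeat split; try constructor; try (intros ? []); auto.
  - inversion ND; subst. destruct (IH H2) as (l1 & l2 & N1 & N2 & I1 & I2 & P1 & P2 & L).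
    destruct (classic (Pr a)) as [Ha|Ha].
    + exists (a :: l1), l2. repeat split; auto.
      * constructor; auto.
      * apply incl_cons; [left; auto|]. apply incl_tl; auto.
      * apply incl_tl; auto.
      * intros x [<-|Hx]; auto.
      * simpl; lia.
    + exists l1, (a :: l2). repeat split; auto.
      * constructor; auto.
      * apply incl_tl; auto.
      * apply incl_cons; [left; auto|]. apply incl_tl; auto.
      * intros x [<-|Hx]; auto.
      * simpl; lia.
Qed.

Lemma NoDup_map_inj {A B} (f : A -> B) l : (forall x y, f x = f y -> x = y) ->
  NoDup l -> NoDup (map f l).
Proof.
  intros Hf; induction 1; simpl; constructor; auto.
  intros Hin. apply in_map_iff in Hin. destruct Hin as [y [Hy Hy']].
  apply Hf in Hy; subst; auto.
Qed.

Lemma NoDup_prod {A B} (l : list A) (l' : list B) : NoDup l -> NoDup l' -> NoDup (list_prod l l').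
Proof.
  intros N1 N2. induction N1; simpl. constructor.
  apply NoDup_app; auto.
  - apply NoDup_map_inj; auto. intros a b H1; inversion H1; auto.
  - intros [u v] Hin Hin2. apply in_map_iff in Hin. destruct Hin as [y [Hy _]].
    inversion Hy; subst. apply in_prod_iff in Hin2. tauto.
Qed.
Definition depth_ok (A : nat -> R -> Prop) (S : list nat) (D : nat) :=
  forall x J, NoDup J -> incl J S -> (forall j, In j J -> A j x) -> (length J <= D)%nat.

Lemma depth_incl A S S' D : incl S' S -> depth_ok A S D -> depth_ok A S' D.
Proof. intros Hi H x J N I HJ. apply (H x J); auto. eapply incl_tran; eauto. Qed.

Lemma arith1 a D w : (1 <= a)%nat -> ((a - D) * w <= w + (a - 1 - D) * w)%nat.
Proof.
  intros H. assert (a - D <= 1 + (a - 1 - D))%nat by lia.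
  apply (Nat.mul_le_mono_r _ _ w) in H0. simpl in H0. lia.
Qed.

Lemma pairs (Pf : R -> Prop) (A B : nat -> R -> Prop) (Da Db : nat)
  (HA : forall j x, A j x -> Pf x) (HB : forall j x, B j x -> Pf x)
  (HAc : forall j x y z, A j x -> A j z -> x <= y <= z -> Pf y -> A j y)
  (HBc : forall j x y z, B j x -> B j z -> x <= y <= z -> Pf y -> B j y) :
  forall n SA SB, (length SA + length SB <= n)%nat -> NoDup SA -> NoDup SB ->
  depth_ok A SA Da -> depth_ok B SB Db ->
  exists G : list (nat * nat), NoDup G /\
    (forall x y, In (x, y) G -> In x SA /\ In y SB /\ forall z, ~ (A x z /\ B y z)) /\
    ((length SA - Da) * (length SB - Db) <= length G)%nat.
Proof.
  induction n as [|n IH]; intros SA SB Hlen NA NB DA DB.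
  - destruct SA; [|simpl in Hlen; lia]. exists []. simpl. split; [constructor|split; [tauto|lia]].
  - destruct SA as [|a0 SA0].
    { exists []. simpl. split; [constructor|split; [tauto|lia]]. }
    destruct SB as [|b0 SB0].
    { exists []. simpl. split; [constructor|split; [tauto|rewrite Nat.mul_0_r; lia]]. }
    remember (a0 :: SA0) as SA eqn:ESA. remember (b0 :: SB0) as SB eqn:ESB.
    set (F := fun t : nat + nat => match t with inl j => A j | inr j => B j end).
    destruct (min_exists F (map inl SA ++ map inr SB)) as [t [Ht Hmin]].
    { subst; simpl; discriminate. }
    destruct t as [j0|j0].
    + assert (Hj0 : In j0 SA).
      { apply in_app_iff in Ht. destruct Ht as [Ht|Ht]; apply in_map_iff in Ht;
        destruct Ht as [xx [Hx Hx']]; inversion Hx; subst; auto. }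
      assert (Hle : forall y, In y SB -> leS (A j0) (B y)).
      { intros y Hy. apply (Hmin (inr y)). apply in_app_iff; right; apply in_map; auto. }
      destruct (geo Pf (A j0) B (HA j0) HBc SB Hle) as [q Hq].
      destruct (partition (fun y => exists z, A j0 z /\ B y z) SB NB)
        as (l1 & l2 & N1 & N2 & I1 & I2 & P1 & P2 & L12).
      assert (Hl1 : (length l1 <= Db)%nat).
      { apply (DB q l1 N1 I1). intros j Hj. apply (Hq j (I1 j Hj) (P1 j Hj)). }
      destruct (in_split _ _ Hj0) as [u [v Huv]].
      assert (NA' : NoDup (u ++ v)) by (rewrite Huv in NA; eapply NoDup_remove_1; eauto).
      assert (Nj0 : ~ In j0 (u ++ v)) by (rewrite Huv in NA; eapply NoDup_remove_2; eauto).
      assert (Iuv : incl (u ++ v) SA).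
      { rewrite Huv. intros x Hx. apply in_app_iff in Hx. apply in_app_iff. simpl. tauto. }
      assert (Luv : length SA = S (length (u ++ v))).
      { rewrite Huv, !length_app. simpl. lia. }
      destruct (IH (u ++ v) SB) as [G' [NG' [PG' LG']]]; auto.
      { lia. } { eapply depth_incl; eauto. }
      exists (map (fun y => (j0, y)) l2 ++ G'). split; [|split].
      * apply NoDup_app; auto.
        -- apply NoDup_map_inj; auto. intros a b H1; inversion H1; auto.
        -- intros [x y] H1 H2. apply in_map_iff in H1. destruct H1 as [w [Hw _]].
           inversion Hw; subst. apply PG' in H2. tauto.
      * intros x y H. apply in_app_iff in H. destruct H as [H|H].
        -- apply in_map_iff in H. destruct H as [w [Hw Hw']]. inversion Hw; subst.
           split; auto. split; auto. intros z [Hz1 Hz2]. apply (P2 y Hw'). eauto.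
        -- apply PG' in H. destruct H as [H1 [H2 H3]]. auto.
      * rewrite length_app, length_map. rewrite Luv.
        eapply Nat.le_trans; [apply (arith1 (S (length (u ++ v))) Da (length SB - Db)); lia|].
        replace (S (length (u ++ v)) - 1)%nat with (length (u ++ v)) by lia. lia.
    + assert (Hj0 : In j0 SB).
      { apply in_app_iff in Ht. destruct Ht as [Ht|Ht]; apply in_map_iff in Ht;
        destruct Ht as [xx [Hx Hx']]; inversion Hx; subst; auto. }
      assert (Hle : forall y, In y SA -> leS (B j0) (A y)).
      { intros y Hy. apply (Hmin (inl y)). apply in_app_iff; left; apply in_map; auto. }
      destruct (geo Pf (B j0) A (HB j0) HAc SA Hle) as [q Hq].
      destruct (partition (fun y => exists z, B j0 z /\ A y z) SA NA)
        as (l1 & l2 & N1 & N2 & I1 & I2 & P1 & P2 & L12).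
      assert (Hl1 : (length l1 <= Da)%nat).
      { apply (DA q l1 N1 I1). intros j Hj. apply (Hq j (I1 j Hj) (P1 j Hj)). }
      destruct (in_split _ _ Hj0) as [u [v Huv]].
      assert (NB' : NoDup (u ++ v)) by (rewrite Huv in NB; eapply NoDup_remove_1; eauto).
      assert (Nj0 : ~ In j0 (u ++ v)) by (rewrite Huv in NB; eapply NoDup_remove_2; eauto).
      assert (Iuv : incl (u ++ v) SB).
      { rewrite Huv. intros x Hx. apply in_app_iff in Hx. apply in_app_iff. simpl. tauto. }
      assert (Luv : length SB = S (length (u ++ v))).
      { rewrite Huv, !length_app. simpl. lia. }
      destruct (IH SA (u ++ v)) as [G' [NG' [PG' LG']]]; auto.
      { lia. } { eapply depth_incl; eauto. }
      exists (map (fun x => (x, j0)) l2 ++ G'). split; [|split].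
      * apply NoDup_app; auto.
        -- apply NoDup_map_inj; auto. intros a b H1; inversion H1; auto.
        -- intros [x y] H1 H2. apply in_map_iff in H1. destruct H1 as [w [Hw _]].
           inversion Hw; subst. apply PG' in H2. tauto.
      * intros x y H. apply in_app_iff in H. destruct H as [H|H].
        -- apply in_map_iff in H. destruct H as [w [Hw Hw']]. inversion Hw; subst.
           split; auto. split; auto. intros z [Hz1 Hz2]. apply (P2 x Hw'). eauto.
        -- apply PG' in H. destruct H as [H1 [H2 H3]]. auto.
      * rewrite length_app, length_map. rewrite Luv.
        rewrite (Nat.mul_comm (length SA - Da)).
        eapply Nat.le_trans; [apply (arith1 (S (length (u ++ v))) Db (length SA - Da)); lia|].
        replace (S (length (u ++ v)) - 1)%nat with (length (u ++ v)) by lia. lia.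
Qed.
Lemma Ceq_props d P C : in_Ceq d P C ->
  (forall p, C p -> P p) /\
  (forall i x y z, C (x, i) -> C (z, i) -> x <= y <= z -> P (y, i) -> C (y, i)).
Proof.
  intros [I [[_ HIc] HC]]. split.
  - intros p Hp. apply HC in Hp. tauto.
  - intros i x y z Hx Hz Hxyz Py. apply HC in Hx. apply HC in Hz. apply HC. split; auto.
    apply (HIc i x y z); tauto.
Qed.

Lemma memb_props d P (l : list pset) : (forall C, In C l -> in_Ceq d P C) ->
  forall j, (forall p, nth j l empty_pset p -> P p) /\
  (forall i x y z, nth j l empty_pset (x, i) -> nth j l empty_pset (z, i) -> x <= y <= z ->
     P (y, i) -> nth j l empty_pset (y, i)).
Proof.
  intros H j. destruct (Compare_dec.lt_dec j (length l)) as [Hj|Hj].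
  - apply Ceq_props with d. apply H. apply nth_In; auto.
  - rewrite nth_overflow by lia. unfold empty_pset. split; intros; tauto.
Qed.

Definition PN (c r : nat) (f : nat -> nat) : nat := fold_right Nat.mul 1%nat (map f (seq c r)).

Local Open Scope nat_scope.
Lemma tuples d P (Cs : nat -> list pset) (D : nat -> nat)
  (HCs : forall k, (k < 2*d)%nat -> forall C, In C (Cs k) -> in_Ceq d P C)
  (HD : forall k, (k < 2*d)%nat -> forall p J, NoDup J -> (forall j, In j J -> (j < length (Cs k))%nat) ->
        (forall j, In j J -> nth j (Cs k) empty_pset p) -> (length J <= D k)%nat) :
  forall r i, (i + r <= d)%nat -> exists T : list (list nat), NoDup T /\
    (forall t, In t T -> length t = (2*r)%nat /\
       (forall k, (k < 2*r)%nat -> (nth k t 0 < length (Cs (2*i+k)))%nat) /\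
       (forall j x, (j < r)%nat -> ~ (nth (nth (2*j) t 0%nat) (Cs (2*i+2*j)%nat) empty_pset (x, S (i+j)) /\
                                   nth (nth (2*j+1) t 0%nat) (Cs (2*i+2*j+1)%nat) empty_pset (x, S (i+j)%nat)))) /\
    (PN (2*i) (2*r) (fun k => length (Cs k) - D k) <= length T)%nat.
Proof.
  induction r as [|r IH]; intros i Hir.
  - exists [[]]. split; [constructor; [intros []|constructor]|]. split.
    + intros t [<-|[]]. split; [reflexivity|]. split; intros; lia.
    + unfold PN. simpl. lia.
  - destruct (IH (S i)) as [T' [NT' [PT' LT']]]; [lia|].
    assert (Ha : (2*i < 2*d)%nat) by lia. assert (Hb : (2*i+1 < 2*d)%nat) by lia.
    destruct (pairs (fun x => P (x, S i))
      (fun j x => nth j (Cs (2*i)) empty_pset (x, S i))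
      (fun j x => nth j (Cs (2*i+1)) empty_pset (x, S i)) (D (2*i)) (D (2*i+1)))
      with (n := (length (seq 0 (length (Cs (2*i)))) + length (seq 0 (length (Cs (2*i+1)))))%nat)
           (SA := seq 0 (length (Cs (2*i)))) (SB := seq 0 (length (Cs (2*i+1))))
      as [G [NG [PG LG]]].
    + intros j x H. apply (proj1 (memb_props d P _ (HCs _ Ha) j)) in H. exact H.
    + intros j x H. apply (proj1 (memb_props d P _ (HCs _ Hb) j)) in H. exact H.
    + intros j x y z. apply (proj2 (memb_props d P _ (HCs _ Ha) j)).
    + intros j x y z. apply (proj2 (memb_props d P _ (HCs _ Hb) j)).
    + lia.
    + apply seq_NoDup.
    + apply seq_NoDup.
    + intros x J NJ IJ HJ. apply (HD _ Ha (x, S i) J NJ); auto.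
      intros j Hj. apply IJ in Hj. apply in_seq in Hj. lia.
    + intros x J NJ IJ HJ. apply (HD _ Hb (x, S i) J NJ); auto.
      intros j Hj. apply IJ in Hj. apply in_seq in Hj. lia.
    + exists (map (fun pr => fst (fst pr) :: snd (fst pr) :: snd pr) (list_prod G T')).
      split; [|split].
      * apply NoDup_map_inj; [|apply NoDup_prod; auto].
        intros [[a b] u] [[a' b'] u'] E. simpl in E. inversion E; subst; auto.
      * intros t Ht. apply in_map_iff in Ht. destruct Ht as [[[x y] t'] [Et Hin]].
        simpl in Et. subst t. apply in_prod_iff in Hin. destruct Hin as [HG HT'].
        destruct (PG x y HG) as [Hx [Hy Hdisj]]. apply in_seq in Hx. apply in_seq in Hy.
        destruct (PT' t' HT') as [Lt [Nt Dt]].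
        split; [simpl; rewrite Lt; lia|]. split.
        -- intros k Hk. destruct k as [|[|k]].
           ++ cbn [nth]. rewrite Nat.add_0_r. lia.
           ++ cbn [nth]. lia.
           ++ cbn [nth]. replace (2*i + S (S k))%nat with (2 * S i + k)%nat by lia. apply Nt. lia.
        -- intros j z Hj. destruct j as [|j].
           ++ rewrite Nat.mul_0_r, !Nat.add_0_r. cbn [nth]. apply Hdisj.
           ++ replace (2 * S j)%nat with (S (S (2*j))) by lia.
              replace (S (S (2*j)) + 1)%nat with (S (S (2*j+1))) by lia.
              replace (2*i + S (S (2*j)))%nat with (2 * S i + 2*j)%nat by lia.
              replace (2 * S i + 2*j + 1)%nat with (2 * S i + 2*j + 1)%nat by lia.
              replace (2*i + S (S (2*j+1)))%nat with (2 * S i + 2*j + 1)%nat by lia.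
              replace (S (i + S j)) with (S (S i + j)) by lia.
              cbn [nth]. apply Dt. lia.
      * rewrite length_map, length_prod.
        replace (2 * S r)%nat with (S (S (2*r))) by lia.
        unfold PN in *. simpl. replace (2 * S i)%nat with (S (S (2*i))) in LT' by lia.
        rewrite !length_seq in LG. rewrite Nat.add_1_r in LG.
        rewrite Nat.mul_assoc. apply Nat.mul_le_mono; auto.
Qed.

Fixpoint allt (Cs : nat -> list pset) (c r : nat) : list (list nat) :=
  match r with
  | O => [[]]
  | S r' => map (fun pr => fst pr :: snd pr) (list_prod (seq 0 (length (Cs c))) (allt Cs (S c) r'))
  end.

Lemma allt_len Cs : forall r c, length (allt Cs c r) = PN c r (fun k => length (Cs k)).
Proof.
  induction r; intros c; simpl. reflexivity.
  rewrite length_map, length_prod, length_seq, IHr. reflexivity.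
Qed.

Lemma allt_in Cs : forall r c t, length t = r ->
  (forall k, (k < r)%nat -> (nth k t 0 < length (Cs (c + k)))%nat) -> In t (allt Cs c r).
Proof.
  induction r; intros c t Lt Ht.
  - destruct t; [left; auto|discriminate].
  - destruct t as [|a t']; [discriminate|]. simpl. apply in_map_iff.
    exists (a, t'). split; auto. apply in_prod_iff. split.
    + apply in_seq. pose proof (Ht 0%nat ltac:(lia)). rewrite Nat.add_0_r in H. simpl in H. lia.
    + apply IHr. simpl in Lt; lia. intros k Hk. pose proof (Ht (S k) ltac:(lia)).
      simpl in H. replace (S c + k)%nat with (c + S k)%nat by lia. auto.
Qed.

Local Open Scope R_scope.
Lemma nat_max (Q : nat -> Prop) N : Q 0%nat -> (forall c, Q c -> (c <= N)%nat) ->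
  exists D, Q D /\ forall c, Q c -> (c <= D)%nat.
Proof.
  revert Q. induction N; intros Q H0 HB.
  - exists 0%nat. split; auto.
  - destruct (classic (Q (S N))) as [HS|HS].
    + exists (S N). split; auto.
    + apply IHN; auto. intros c Hc. pose proof (HB c Hc).
      destruct (Nat.eq_dec c (S N)); [subst; contradiction|lia].
Qed.

Lemma prodR_INR (g : nat -> nat) l :
  fold_right Rmult 1 (map (fun k => INR (g k)) l) = INR (fold_right Nat.mul 1%nat (map g l)).
Proof. induction l; simpl; auto. rewrite IHl, mult_INR. reflexivity. Qed.

Lemma prodR_nonneg (b : nat -> R) l : (forall k, In k l -> 0 <= b k) ->
  0 <= fold_right Rmult 1 (map b l).
Proof.
  induction l; simpl; intros H. lra.
  apply Rmult_le_pos; auto.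
Qed.

Lemma prodR_strict (a b : nat -> R) l : l <> [] -> (forall k, In k l -> 0 <= b k < a k) ->
  fold_right Rmult 1 (map b l) < fold_right Rmult 1 (map a l).
Proof.
  induction l as [|x l IH]; intros Hne H; [contradiction|].
  simpl. destruct (H x (or_introl eq_refl)) as [H1 H2].
  destruct l as [|y l'].
  - simpl. lra.
  - assert (Hlt := IH ltac:(discriminate) (fun k Hk => H k (or_intror Hk))).
    assert (Hb := prodR_nonneg b (y :: l') (fun k Hk => proj1 (H k (or_intror Hk)))).
    nra.
Qed.

Lemma prodR_scale (c : R) (g : nat -> R) l :
  fold_right Rmult 1 (map (fun k => c * g k) l) = c ^ length l * fold_right Rmult 1 (map g l).
Proof. induction l; simpl; [lra|]. rewrite IHl. ring. Qed.

Lemma nroot_nonneg x n : 0 <= nroot x n.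
Proof. unfold nroot. destruct Req_EM_T. lra. unfold Rpower. left; apply exp_pos. Qed.

Lemma nroot_pow x n : 0 <= x -> (0 < n)%nat -> nroot x n ^ n = x.
Proof.
  intros Hx Hn. unfold nroot. destruct Req_EM_T as [E|E].
  - subst. apply pow_i; auto.
  - rewrite <- Rpower_pow by (unfold Rpower; apply exp_pos).
    rewrite Rpower_mult, Rinv_l, Rpower_1; auto. lra.
    apply not_0_INR; lia.
Qed.
Theorem theorem6 (d : nat) (P : pset) (alpha : R) (Cs : nat -> list pset) :
  (1 <= d)%nat ->
  (forall x i, P (x, i) -> (1 <= i <= d)%nat) ->
  0 < alpha <= 1 ->
  (forall k, (k < 2 * d)%nat ->
     distinct_sets (Cs k) /\ (forall C, In C (Cs k) -> in_Ceq d P C)) ->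
  (exists L : list (list nat),
     NoDup L /\
     (forall t, In t L -> valid_tuple (2 * d) Cs t /\ tuple_intersects (2 * d) Cs t) /\
     INR (length L) >= alpha * prod_sizes (2 * d) Cs) ->
  exists k, (k < 2 * d)%nat /\
    exists J : list nat,
      NoDup J /\ (forall j, In j J -> (j < length (Cs k))%nat) /\
      INR (length J) >= (1 - nroot (1 - alpha) (2 * d)) * INR (length (Cs k)) /\
      exists p, forall j, In j J -> nth j (Cs k) empty_pset p.
Proof.
  intros Hd HP Ha HCs0 [L [NL [HL HLen]]].
  assert (HCs : forall k, (k < 2*d)%nat -> forall C, In C (Cs k) -> in_Ceq d P C)
    by (intros k Hk; apply (HCs0 k Hk)).
  set (c := nroot (1 - alpha) (2 * d)).
  assert (Hc0 : 0 <= c) by apply nroot_nonneg.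
  assert (Hcp : c ^ (2 * d) = 1 - alpha) by (apply nroot_pow; [lra|lia]).
  apply NNPP; intro Hno.
  assert (Hex : forall k, exists Dk : nat, (k < 2 * d)%nat ->
     (Dk <= length (Cs k))%nat /\ INR Dk < (1 - c) * INR (length (Cs k)) /\
     forall p J, NoDup J -> (forall j, In j J -> (j < length (Cs k))%nat) ->
       (forall j, In j J -> nth j (Cs k) empty_pset p) -> (length J <= Dk)%nat).
  { intro k. destruct (Compare_dec.lt_dec k (2 * d)) as [Hk|Hk]; [|exists 0%nat; intros; lia].
    set (Q := fun m => exists p J, NoDup J /\ (forall j, In j J -> (j < length (Cs k))%nat) /\
                 (forall j, In j J -> nth j (Cs k) empty_pset p) /\ length J = m).
    assert (HB : forall m, Q m -> (m <= length (Cs k))%nat).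
    { intros m (p & J & NJ & BJ & _ & <-). rewrite <- (length_seq (length (Cs k)) 0).
      apply NoDup_incl_length; auto. intros j Hj. apply in_seq. specialize (BJ j Hj). lia. }
    destruct (nat_max Q (length (Cs k))) as [D [QD Dmax]]; auto.
    { exists (0, 0%nat), []. repeat split; try constructor; intros j []. }
    exists D. intros _. split; [apply HB; auto|]. split.
    - destruct QD as (p & J & NJ & BJ & PJ & LJ).
      apply Rnot_le_lt. intro Hge. apply Hno. exists k. split; auto. exists J.
      split; auto. split; auto. split.
      + rewrite LJ. fold c. lra.
      + exists p; auto.
    - intros p J NJ BJ PJ. apply Dmax. exists p, J. auto. }
  set (D := fun k => proj1_sig (constructive_indefinite_description _ (Hex k))).
  assert (HDp : forall k, (k < 2 * d)%nat ->
     (D k <= length (Cs k))%nat /\ INR (D k) < (1 - c) * INR (length (Cs k)) /\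
     forall p J, NoDup J -> (forall j, In j J -> (j < length (Cs k))%nat) ->
       (forall j, In j J -> nth j (Cs k) empty_pset p) -> (length J <= D k)%nat).
  { intros k Hk. exact (proj2_sig (constructive_indefinite_description _ (Hex k)) Hk). }
  destruct (tuples d P Cs D HCs (fun k Hk => proj2 (proj2 (HDp k Hk))) d 0 ltac:(lia))
    as [T0 [NT0 [PT0 LT0]]].
  assert (HT0nonint : forall t, In t T0 -> ~ tuple_intersects (2 * d) Cs t).
  { intros t Ht [[x s] Hp]. destruct (PT0 t Ht) as [Lt [Nt Dt]].
    assert (H0 : (0 < 2 * d)%nat) by lia.
    assert (Hs : (1 <= s <= d)%nat).
    { apply (HP x s). pose proof (Nt 0%nat H0) as N0. rewrite Nat.mul_0_r in N0. simpl in N0.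
      apply (proj1 (Ceq_props d P _ (HCs 0%nat H0 _ (nth_In _ empty_pset N0)))).
      apply (Hp 0%nat H0). }
    apply (Dt (s - 1)%nat x ltac:(lia)).
    rewrite Nat.mul_0_r, !Nat.add_0_l. replace (S (s - 1)) with s by lia.
    split; apply Hp; lia. }
  assert (Hcount : (length L + length T0 <= PN 0 (2 * d) (fun k => length (Cs k)))%nat).
  { rewrite <- length_app, <- allt_len. apply NoDup_incl_length.
    - apply NoDup_app; auto. intros t H1 H2. apply (HT0nonint t H2). apply (HL t H1).
    - intros t Ht. apply in_app_iff in Ht. destruct Ht as [Ht|Ht].
      + destruct (HL t Ht) as [[Lt Bt] _]. apply allt_in; auto.
      + destruct (PT0 t Ht) as [Lt [Nt _]]. apply allt_in; auto.
        }
  assert (Hps : prod_sizes (2 * d) Cs = INR (PN 0 (2 * d) (fun k => length (Cs k)))).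
  { unfold prod_sizes, PN. apply prodR_INR. }
  assert (Hstrict : (1 - alpha) * prod_sizes (2 * d) Cs < INR (PN 0 (2 * d) (fun k => (length (Cs k) - D k)%nat))).
  { unfold PN. rewrite <- prodR_INR. unfold prod_sizes.
    rewrite <- Hcp. rewrite <- (length_seq (2 * d) 0) at 1. rewrite <- prodR_scale.
    apply prodR_strict.
    - destruct d; [lia|]. simpl. discriminate.
    - intros k Hk. apply in_seq in Hk. destruct (HDp k ltac:(lia)) as [H1 [H2 _]].
      rewrite minus_INR by auto. split.
      + apply Rmult_le_pos; auto. apply pos_INR.
      + lra. }
  assert (H1 : INR (length L) + INR (length T0) <= prod_sizes (2 * d) Cs).
  { rewrite Hps, <- plus_INR. apply le_INR; auto. }
  assert (H2 : INR (PN 0 (2 * d) (fun k => (length (Cs k) - D k)%nat)) <= INR (length T0)).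
  { apply le_INR. rewrite Nat.mul_0_r in LT0. exact LT0. }
  lra.
Qed.
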